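(* Let $G$ be a finite group, $f$ a unitary representation of $G$ on a finite-dimensional Hilbert space $\mathcal H$, and $\rho$ a pure state on $\mathcal H$. Let $0<\epsilon<1$ and $\delta_1,\delta_2>0$. Then $$\log M(\rho,\epsilon)\ \ge\ H_s^{\epsilon-\delta_1-\delta_2}(\mathrm{av}_f[\rho])-\log\frac{1}{\delta_1\delta_2},\qquad \log M(\rho,\epsilon)\ \le\ H_s^{\epsilon+\delta_1+2\delta_2}(\mathrm{av}_f[\rho])+\log\frac{1}{\delta_1\delta_2^2}.$$
   Context: $\mathrm{av}_f[\rho]:=\frac{1}{|G|}\sum_{g\in G}f(g)\rho f(g)^\dagger$. $M(\rho,\epsilon)$ is the number of distinguishable states among $\{f(g)\rho f(g)^\dagger\}_{g\in G}$ with error probability $\epsilon$: the largest integer $N$ for which there exist $g_1,\dots,g_N\in G$ and a POVM $\{\Pi_1,\dots,\Pi_N\}$ with $\frac1N\sum_{i=1}^N\mathrm{tr}\,f(g_i)\rho f(g_i)^\dagger(I-\Pi_i)\le\epsilon$. For a state $\sigma$ and $\epsilon\in\mathbb R$, $H_s^{\epsilon}(\sigma):=\max\{\lambda\in\mathbb R:\mathrm{tr}\,\sigma\{\sigma\ge e^{-\lambda}\}\le\epsilon\}$, where $\{\sigma\ge e^{-\lambda}\}$ is the projection onto the span of eigenvectors of $\sigma$ with eigenvalues $\ge e^{-\lambda}$. Logarithms are natural. *)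

(* Defs.v *)
From HB Require Import structures.
From mathcomp Require Import all_boot all_order all_algebra all_fingroup.
From mathcomp Require Import mxrepresentation.
From mathcomp Require Import complex.
From mathcomp Require Import all_classical all_reals.
From mathcomp Require Import ereal.
From mathcomp.analysis Require Import sequences exp.

Set Implicit Arguments.
Unset Strict Implicit.
Unset Printing Implicit Defensive.

Import Order.TTheory GRing.Theory Num.Theory.
Local Open Scope ring_scope.

Section QDefs.
Variable R : realType.
Local Notation C := R[i].

Definition adjmx {m n : nat} (A : 'M[C]_(m, n)) : 'M[C]_(n, m) :=
  (map_mx (@Num.conj C) A)^T.

Definition unitary {n : nat} (U : 'M[C]_n) : Prop :=
  U *m adjmx U = 1%:M /\ adjmx U *m U = 1%:M.

Definition psd {n : nat} (A : 'M[C]_n) : Prop :=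
  forall v : 'cV[C]_n, 0 <= (adjmx v *m A *m v) 0 0.

Definition pure_state {n : nat} (rho : 'M[C]_n) : Prop :=
  exists v : 'cV[C]_n, adjmx v *m v = 1%:M /\ rho = v *m adjmx v.

Definition avf {gT : finGroupType} {G : {group gT}} {n : nat}
  (f : mx_representation C G n) (rho : 'M[C]_n) : 'M[C]_n :=
  (#|G|%:R)^-1 *: \sum_(g in G) (f g *m rho *m adjmx (f g)).

Definition distinguishable {gT : finGroupType} {G : {group gT}} {n : nat}
  (f : mx_representation C G n) (rho : 'M[C]_n) (eps : R) (N : nat) : Prop :=
  exists (g : 'I_N -> gT) (Pi : 'I_N -> 'M[C]_n),
    (forall i, g i \in G) /\
    (forall i, psd (Pi i)) /\ \sum_(i < N) Pi i = 1%:M /\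
    (N%:R)^-1 * \sum_(i < N)
        \tr (f (g i) *m rho *m adjmx (f (g i)) *m (1%:M - Pi i))
      <= (eps%:C)%C.

Definition is_M {gT : finGroupType} {G : {group gT}} {n : nat}
  (f : mx_representation C G n) (rho : 'M[C]_n) (eps : R) (M : nat) : Prop :=
  distinguishable f rho eps M /\
  (forall N, distinguishable f rho eps N -> (N <= M)%N).

(* tr sigma {sigma >= c} <= eps, where {sigma >= c} is the projection onto the
   span of eigenvectors of sigma with eigenvalue >= c, computed from a
   spectral decomposition sigma = U^dagger diag(d) U (U unitary, d real). *)
Definition tr_proj_ge_le {n : nat} (sigma : 'M[C]_n) (c eps : R) : Prop :=
  exists (U : 'M[C]_n) (d : 'I_n -> R),
    unitary U /\
    sigma = adjmx U *m diag_mx (\row_i ((d i)%:C)%C) *m U /\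
    \tr (sigma *m (adjmx U *m
           diag_mx (\row_i (if c <= d i then 1 else 0)) *m U)) <= (eps%:C)%C.

(* H_s^eps(sigma) = sup { lambda | tr sigma {sigma >= e^{-lambda}} <= eps },
   valued in the extended reals (sup of empty set = -oo). *)
Definition Hs {n : nat} (eps : R) (sigma : 'M[C]_n) : \bar R :=
  ereal_sup [set (lam%:E)%E | lam in [set lam : R |
                 tr_proj_ge_le sigma (expR (- lam)) eps]].

End QDefs.

(* Main.v *)
Require Import Defs.
From HB Require Import structures.
From mathcomp Require Import all_boot all_order all_algebra all_fingroup.
From mathcomp Require Import mxrepresentation.
From mathcomp Require Import complex.
From mathcomp Require Import all_classical all_reals.
From mathcomp Require Import ereal.
From mathcomp.analysis Require Import sequences exp.
From mathcomp Require Import spectral sesquilinear.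
From mathcomp Require Import ring lra.

Import Order.TTheory GRing.Theory Num.Theory.
Local Open Scope ring_scope.

Set Implicit Arguments.
Unset Strict Implicit.
Unset Printing Implicit Defensive.
Section Mx.
Variable R : realType.
Local Notation C := R[i].

Lemma adjmxM m n p (A : 'M[C]_(m, n)) (B : 'M[C]_(n, p)) :
  adjmx (A *m B) = adjmx B *m adjmx A.
Proof. by rewrite /adjmx map_mxM trmx_mul. Qed.

Lemma adjmxK m n (A : 'M[C]_(m, n)) : adjmx (adjmx A) = A.
Proof.
by apply/matrixP => i j; rewrite /adjmx !mxE conjCK.
Qed.

Lemma adjmxD m n (A B : 'M[C]_(m, n)) : adjmx (A + B) = adjmx A + adjmx B.
Proof. by apply/matrixP => i j; rewrite /adjmx !mxE rmorphD. Qed.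

Lemma adjmxN m n (A : 'M[C]_(m, n)) : adjmx (- A) = - adjmx A.
Proof. by apply/matrixP => i j; rewrite /adjmx !mxE rmorphN. Qed.

Lemma adjmxB m n (A B : 'M[C]_(m, n)) : adjmx (A - B) = adjmx A - adjmx B.
Proof. by rewrite adjmxD adjmxN. Qed.

Lemma adjmxZ m n a (A : 'M[C]_(m, n)) : adjmx (a *: A) = a^* *: adjmx A.
Proof. by apply/matrixP => i j; rewrite /adjmx !mxE rmorphM. Qed.

Lemma adjmx1 n : adjmx (1%:M : 'M[C]_n) = 1%:M.
Proof.
by apply/matrixP => i j; rewrite /adjmx !mxE eq_sym; case: eqP; rewrite ?rmorph1 ?rmorph0.
Qed.

Lemma adjmx0 m n : adjmx (0 : 'M[C]_(m, n)) = 0.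
Proof. by apply/matrixP => i j; rewrite /adjmx !mxE rmorph0. Qed.

Lemma adjmx_sum m n I (r : seq I) (P : pred I) (F : I -> 'M[C]_(m, n)) :
  adjmx (\sum_(i <- r | P i) F i) = \sum_(i <- r | P i) adjmx (F i).
Proof.
elim/big_rec2: _ => [|i y1 y2 _ <-]; first by rewrite adjmx0.
by rewrite adjmxD.
Qed.

Lemma adjmx_diag n (d : 'I_n -> R) :
  adjmx (diag_mx (\row_i (d i)%:C%C)) = diag_mx (\row_i ((d i)%:C%C : C)).
Proof.
apply/matrixP => i j; rewrite /adjmx !mxE eq_sym.
by case: eqP => [->|]; rewrite ?mulr1n ?mulr0n ?rmorph0 //; rewrite /= conj_Creal // complex_real.
Qed.

Definition qf n (A : 'M[C]_n) (u : 'cV[C]_n) : C := (adjmx u *m A *m u) 0 0.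

Lemma qf_tr n (A : 'M[C]_n) (u : 'cV[C]_n) : qf A u = \tr (A *m (u *m adjmx u)).
Proof.
by rewrite mulmxA mxtrace_mulC /qf mulmxA /mxtrace big_ord1.
Qed.

Lemma tr_adj n (A : 'M[C]_n) : \tr (adjmx A) = (\tr A)^*.
Proof. by rewrite /mxtrace rmorph_sum; apply: eq_bigr => i _; rewrite /adjmx !mxE. Qed.

Lemma qfD n (A B : 'M[C]_n) u : qf (A + B) u = qf A u + qf B u.
Proof. by rewrite /qf mulmxDr mulmxDl mxE. Qed.

Lemma qfN n (A : 'M[C]_n) u : qf (- A) u = - qf A u.
Proof. by rewrite /qf mulmxN mulNmx mxE. Qed.

Lemma qfB n (A B : 'M[C]_n) u : qf (A - B) u = qf A u - qf B u.
Proof. by rewrite qfD qfN. Qed.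

Lemma qfZ n a (A : 'M[C]_n) u : qf (a *: A) u = a * qf A u.
Proof. by rewrite /qf -scalemxAr -scalemxAl mxE. Qed.

Lemma qf_sum n I (r : seq I) (P : pred I) (F : I -> 'M[C]_n) u :
  qf (\sum_(i <- r | P i) F i) u = \sum_(i <- r | P i) qf (F i) u.
Proof.
elim/big_rec2: _ => [|i y1 y2 _ <-]; first by rewrite /qf mulmx0 mul0mx mxE.
by rewrite qfD.
Qed.

Lemma qf_conj n (A : 'M[C]_n) u : (qf A u)^* = qf (adjmx A) u.
Proof.
rewrite /qf; set X := adjmx u *m A *m u.
have -> : (X 0 0)^* = adjmx X 0 0 by rewrite /adjmx !mxE.
by rewrite /X !adjmxM adjmxK mulmxA.
Qed.

Lemma qf_vecD n (A : 'M[C]_n) (x y : 'cV[C]_n) :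
  qf A (x + y) = qf A x + qf A y + (adjmx x *m A *m y) 0 0 + (adjmx y *m A *m x) 0 0.
Proof.
rewrite /qf adjmxD !mulmxDl !mulmxDr !mxE; ring.
Qed.

Lemma qf_vecZ n (A : 'M[C]_n) a (x : 'cV[C]_n) : qf A (a *: x) = a^* * a * qf A x.
Proof.
by rewrite /qf adjmxZ -!scalemxAl -scalemxAr !mxE mulrA.
Qed.

Lemma qf_vecN n (A : 'M[C]_n) (x : 'cV[C]_n) : qf A (- x) = qf A x.
Proof.
by rewrite -scaleN1r qf_vecZ rmorphN rmorph1 mulrNN mul1r mul1r.
Qed.

Lemma qf_mul n (A B : 'M[C]_n) u : qf (adjmx B *m A *m B) u = qf A (B *m u).
Proof. by rewrite /qf adjmxM !mulmxA. Qed.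

Lemma qf1 n (u : 'cV[C]_n) : qf 1%:M u = \sum_i (u i 0)^* * u i 0.
Proof.
rewrite /qf mulmx1 !mxE; apply: eq_bigr => i _; by rewrite /adjmx !mxE.
Qed.

Lemma qf1_ge0 n (u : 'cV[C]_n) : 0 <= qf 1%:M u.
Proof.
rewrite qf1; apply: sumr_ge0 => i _; by rewrite mulrC mul_conjC_ge0.
Qed.

Lemma psd_qf n (A : 'M[C]_n) u : psd A -> 0 <= qf A u.
Proof. by move=> /(_ u). Qed.

Lemma psdD n (A B : 'M[C]_n) : psd A -> psd B -> psd (A + B).
Proof.
move=> pA pB u; have := qfD A B u; rewrite /qf => ->; exact: addr_ge0.
Qed.

Lemma psdZ n a (A : 'M[C]_n) : 0 <= a -> psd A -> psd (a *: A).
Proof.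
move=> a0 pA u; have := qfZ a A u; rewrite /qf => ->; exact: mulr_ge0.
Qed.

Lemma psd_sum n I (r : seq I) (P : pred I) (F : I -> 'M[C]_n) :
  (forall i, P i -> psd (F i)) -> psd (\sum_(i <- r | P i) F i).
Proof.
move=> H; elim/big_rec: _ => [|i y Pi py].
  by move=> u; rewrite mulmx0 mul0mx mxE.
exact: psdD (H _ Pi) py.
Qed.

Lemma psd_adjmul m n (B : 'M[C]_(m, n)) : psd (adjmx B *m B).
Proof.
move=> u; rewrite mulmxA -(mulmxA _ B) -adjmxM -(mulmx1 (adjmx (B *m u))).
exact: qf1_ge0.
Qed.

End Mx.
Section Mx2.
Variable R : realType.
Local Notation C := R[i].

Lemma bil_delta n (B : 'M[C]_n) i j :
  (adjmx (delta_mx i 0 : 'cV[C]_n) *m B *m (delta_mx j 0 : 'cV[C]_n)) 0 0 = B i j.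
Proof.
have -> : adjmx (delta_mx i 0 : 'cV[C]_n) = (delta_mx 0 i : 'rV[C]_n).
  apply/matrixP => a b; rewrite /adjmx !mxE.
  by case: (_ == _); case: (_ == _); rewrite /= ?rmorph1 ?rmorph0.
by rewrite -rowE -colE !mxE.
Qed.

Lemma bilZr n (B : 'M[C]_n) (x y : 'cV[C]_n) a :
  (adjmx x *m B *m (a *: y)) 0 0 = a * (adjmx x *m B *m y) 0 0.
Proof. by rewrite -scalemxAr mxE. Qed.

Lemma bilZl n (B : 'M[C]_n) (x y : 'cV[C]_n) a :
  (adjmx (a *: x) *m B *m y) 0 0 = a^* * (adjmx x *m B *m y) 0 0.
Proof. by rewrite adjmxZ -!scalemxAl mxE. Qed.

Lemma qf0_eq0 n (B : 'M[C]_n) : (forall u, qf B u = 0) -> B = 0.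
Proof.
move=> H; apply/matrixP => i j; rewrite mxE.
have Hii k : B k k = 0 by rewrite -bil_delta; exact: H.
have h1 := H (delta_mx i 0 + delta_mx j 0).
rewrite qf_vecD /qf !bil_delta !Hii !add0r in h1.
have h2 := H (delta_mx i 0 + 'i *: delta_mx j 0).
rewrite qf_vecD qf_vecZ /qf bilZr bilZl !bil_delta !Hii mulr0 !add0r in h2.
rewrite conjCi in h2.
have : 2 * 'i * B i j = 0.
  have -> : 2 * 'i * B i j = 'i * (B i j + B j i) + ('i * B i j + - 'i * B j i) by ring.
  by rewrite h1 h2 mulr0 addr0.
move/eqP; rewrite !mulf_eq0 pnatr_eq0 /= (negbTE (neq0Ci _)) /=; by move/eqP.
Qed.

Lemma psd_herm n (A : 'M[C]_n) : psd A -> adjmx A = A.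
Proof.
move=> pA; apply/eqP; rewrite -subr_eq0; apply/eqP; apply: qf0_eq0 => u.
rewrite qfB -qf_conj geC0_conj ?subrr //; exact: psd_qf.
Qed.

Lemma herm_hermsym n (A : 'M[C]_n) : adjmx A = A -> A \is hermsymmx.
Proof.
move=> hA; apply/is_hermitianmxP; rewrite expr0 scale1r.
by rewrite -{1}hA; apply/matrixP => i j; rewrite /adjmx !mxE.
Qed.

Lemma spectral_herm n (A : 'M[C]_n) : adjmx A = A ->
  exists (U : 'M[C]_n) (d : 'I_n -> R),
    unitary U /\ A = adjmx U *m diag_mx (\row_i ((d i)%:C)%C) *m U.
Proof.
move=> hA; have hs := herm_hermsym hA.
have /orthomx_spectralP Aeq := hermitian_normalmx hs.
have Ureal := hermitian_spectral_diag_real hs.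
set S := spectralmx A in Aeq; set sp := spectral_diag A in Aeq Ureal.
have Su : S \is unitarymx by exact: spectral_unitarymx.
have adjS : adjmx S = invmx S.
  rewrite invmx_unitary //; apply/matrixP => i j; by rewrite /adjmx !mxE.
exists S, (fun i => complex.Re (sp 0 i)); split.
  split; first by rewrite adjS mulmxV // unitarymx_unit.
  by rewrite adjS mulVmx // unitarymx_unit.
rewrite {1}Aeq adjS; congr (_ *m diag_mx _ *m _).
apply/matrixP => i j; rewrite !mxE ord1 RRe_real //.
by move/mxOverP: Ureal; apply.
Qed.

Lemma qf_diag n (x : 'I_n -> C) (z : 'cV[C]_n) :
  qf (diag_mx (\row_i x i)) z = \sum_k (z k 0)^* * x k * z k 0.
Proof.
rewrite /qf mul_mx_diag !mxE; apply: eq_bigr => k _; by rewrite !mxE.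
Qed.

Lemma qf_delta n (A : 'M[C]_n) k : qf A (delta_mx k 0) = A k k.
Proof. exact: bil_delta. Qed.

Lemma unitary_qf1 n (U : 'M[C]_n) w : unitary U -> qf 1%:M (U *m w) = qf 1%:M w.
Proof. by case=> _ h; rewrite -qf_mul mulmx1 h. Qed.

Lemma qf_le_tr n (A : 'M[C]_n) w : psd A -> qf A w <= \tr A * qf 1%:M w.
Proof.
move=> pA; have [U [d [[uU1 uU2] Aeq]]] := spectral_herm (psd_herm pA).
set D := diag_mx _ in Aeq.
have dge0 k : 0 <= ((d k)%:C)%C.
  have -> : ((d k)%:C)%C = qf D (delta_mx k 0) by rewrite qf_delta mxE eqxx mulr1n mxE.
  have -> : D = adjmx (adjmx U) *m A *m adjmx U.
    by rewrite adjmxK Aeq !mulmxA uU1 mul1mx -mulmxA uU1 mulmx1.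
  by rewrite qf_mul; exact: psd_qf.
have -> : qf A w = qf D (U *m w) by rewrite -qf_mul -Aeq.
have -> : \tr A = \tr D by rewrite Aeq mxtrace_mulC mulmxA uU1 mul1mx.
rewrite -(unitary_qf1 w (conj uU1 uU2)) qf_diag qf1 mxtrace_diag mulr_sumr.
apply: ler_sum => k _.
set a := (U *m w) k 0.
have -> : a^* * ((d k)%:C)%C * a = ((d k)%:C)%C * (a^* * a) by ring.
apply: ler_wpM2r; first by rewrite mulrC mul_conjC_ge0.
rewrite (bigD1 k) //= mxE lerDl; apply: sumr_ge0 => j _; by rewrite mxE.
Qed.

End Mx2.
Section Mx3.
Variable R : realType.
Local Notation C := R[i].

Definition dg n (x : 'I_n -> C) : 'M[C]_n := diag_mx (\row_i x i).

Lemma unit_conj_mul n (U : 'M[C]_n) (X Y : 'M[C]_n) : unitary U ->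
  (adjmx U *m X *m U) *m (adjmx U *m Y *m U) = adjmx U *m (X *m Y) *m U.
Proof.
by case=> u1 u2; rewrite !mulmxA -[adjmx U *m X *m U *m adjmx U]mulmxA u1 mulmx1.
Qed.

Lemma unit_conj_inj n (U : 'M[C]_n) (X Y : 'M[C]_n) : unitary U ->
  adjmx U *m X *m U = adjmx U *m Y *m U -> X = Y.
Proof.
case=> u1 u2 h.
have e Z : U *m (adjmx U *m Z *m U) *m adjmx U = Z.
  by rewrite !mulmxA u1 mul1mx -!mulmxA u1 !mulmx1.
by rewrite -(e X) h e.
Qed.

Lemma tr_unit_conj n (U : 'M[C]_n) (X : 'M[C]_n) : unitary U ->
  \tr (adjmx U *m X *m U) = \tr X.
Proof. by case=> u1 u2; rewrite mxtrace_mulC mulmxA u1 mul1mx. Qed.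

Lemma dgM n (x y : 'I_n -> C) : dg x *m dg y = dg (fun k => x k * y k).
Proof.
apply/matrixP => i j; rewrite /dg mul_mx_diag !mxE.
by case: eqP => [->|]; rewrite ?mulr1n ?mulr0n ?mul0r.
Qed.

Lemma tr_dg n (x : 'I_n -> C) : \tr (dg x) = \sum_k x k.
Proof. by rewrite /dg mxtrace_diag; apply: eq_bigr => k _; rewrite mxE. Qed.

Lemma adj_dg n (x : 'I_n -> C) : adjmx (dg x) = dg (fun k => (x k)^*).
Proof.
apply/matrixP => i j; rewrite /adjmx /dg !mxE eq_sym.
by case: eqP => [->|]; rewrite ?mulr1n ?mulr0n ?rmorph0.
Qed.

Lemma adj_unit_conj n (U X : 'M[C]_n) : adjmx (adjmx U *m X *m U) = adjmx U *m adjmx X *m U.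
Proof. by rewrite !adjmxM adjmxK mulmxA. Qed.

Definition hproj n (P : 'M[C]_n) := adjmx P = P /\ P *m P = P.

Lemma hproj_qf n (P : 'M[C]_n) u : hproj P -> qf P u = qf 1%:M (P *m u).
Proof. by case=> h1 h2; rewrite -qf_mul mulmx1 h1 h2. Qed.

Lemma hproj_psd n (P : 'M[C]_n) : hproj P -> psd P.
Proof. move=> hP u; have := hproj_qf u hP; rewrite /qf => ->; exact: qf1_ge0. Qed.

Lemma hprojC n (P : 'M[C]_n) : hproj P -> hproj (1%:M - P).
Proof.
case=> h1 h2; split; first by rewrite adjmxB adjmx1 h1.
by rewrite mulmxBl !mulmxBr !mul1mx mulmx1 h2 subrr subr0.
Qed.

Lemma hproj_diag_le1 n (P : 'M[C]_n) k : hproj P -> 0 <= P k k <= 1.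
Proof.
case=> h1 h2.
have pkE : P k k = \sum_j P k j * (P k j)^*.
  rewrite -{1}h2 mxE; apply: eq_bigr => j _.
  by rewrite -{2}h1 /adjmx !mxE.
have p0 : 0 <= P k k by rewrite pkE; apply: sumr_ge0 => j _; exact: mul_conjC_ge0.
rewrite p0 /=.
have : P k k * (P k k)^* <= P k k.
  rewrite [X in _ <= X]pkE (bigD1 k) //= lerDl; apply: sumr_ge0 => j _; exact: mul_conjC_ge0.
rewrite geC0_conj // => h.
have [->|pn0] := eqVneq (P k k) 0; first by rewrite ler01.
have pk_gt0 : 0 < P k k by rewrite lt_def pn0 p0.
by rewrite -subr_ge0 -(pmulr_rge0 _ pk_gt0) mulrBr mulr1 subr_ge0.
Qed.

End Mx3.
Section Mx4.
Variable R : realType.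
Local Notation C := R[i].

Definition Tsum n (d : 'I_n -> R) (c : R) : R :=
  \sum_k (if c <= d k then d k else 0).

Definition dC n (d : 'I_n -> R) : 'I_n -> C := fun k => ((d k)%:C)%C.
Definition ind n (d : 'I_n -> R) (c : R) : 'I_n -> C :=
  fun k => if c <= d k then 1 else 0.

Lemma trace_proj n (U : 'M[C]_n) d c : unitary U ->
  \tr ((adjmx U *m dg (dC d) *m U) *m (adjmx U *m dg (ind d c) *m U)) = ((Tsum d c)%:C)%C.
Proof.
move=> uU; rewrite unit_conj_mul // tr_unit_conj // dgM tr_dg /Tsum rmorph_sum.
apply: eq_bigr => k _; rewrite /dC /ind; case: ifP => _; by rewrite ?mulr1 ?mulr0.
Qed.

Lemma hproj_conj n (U P : 'M[C]_n) : unitary U -> hproj P -> hproj (U *m P *m adjmx U).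
Proof.
move=> [u1 u2] [h1 h2]; split; first by rewrite !adjmxM adjmxK h1 mulmxA.
by rewrite -!mulmxA [adjmx U *m _]mulmxA u2 mul1mx [P *m (P *m _)]mulmxA h2 !mulmxA.
Qed.

Lemma unit_conj_back n (U P : 'M[C]_n) : unitary U -> P = adjmx U *m (U *m P *m adjmx U) *m U.
Proof. by move=> [u1 u2]; rewrite !mulmxA u2 mul1mx -mulmxA u2 mulmx1. Qed.

Lemma tr_proj_bound n (U : 'M[C]_n) d (P : 'M[C]_n) (c : R) : unitary U -> hproj P -> 0 <= c ->
  \tr (P *m (adjmx U *m dg (dC d) *m U)) <= ((Tsum d c)%:C)%C + (c%:C)%C * \tr P.
Proof.
move=> uU hP c0; set P' := U *m P *m adjmx U.
have hP' := hproj_conj uU hP.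
rewrite (unit_conj_back P uU) -/P' unit_conj_mul // !tr_unit_conj //.
rewrite /mxtrace /Tsum rmorph_sum mulr_sumr -big_split /=; apply: ler_sum => k _.
have -> : (P' *m dg (dC d)) k k = P' k k * ((d k)%:C)%C by rewrite /dg mul_mx_diag !mxE.
have /andP [p0 p1] := hproj_diag_le1 k hP'.
move: p0 p1; rewrite -/P'; move: (P' k k) => p p0 p1.
case: ifP => h.
  have dk0 : 0 <= ((d k)%:C)%C by rewrite lecR (le_trans c0 h).
  apply: le_trans (_ : ((d k)%:C)%C <= _); first by rewrite ler_piMl.
  by rewrite lerDl mulr_ge0 // lecR.
rewrite add0r mulrC; apply: ler_wpM2r => //; rewrite lecR; apply: ltW; rewrite ltNge h //.
Qed.

End Mx4.
Section Rank1.
Variable R : realType.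
Local Notation C := R[i].
Variable n : nat.
Implicit Types (P : 'M[C]_n) (u : 'cV[C]_n).

Lemma mx11E (X : 'M[C]_1) : X = (X 0 0)%:M.
Proof. by rewrite {1}[X]mx11_scalar. Qed.

Lemma qf_rank1 (r x : 'cV[C]_n) :
  qf (r *m adjmx r) x = ((adjmx r *m x) 0 0)^* * (adjmx r *m x) 0 0.
Proof.
rewrite /qf.
have -> : adjmx x *m (r *m adjmx r) *m x = (adjmx x *m r) *m (adjmx r *m x) by rewrite !mulmxA.
set s := (adjmx r *m x) 0 0.
rewrite [adjmx r *m x]mx11E -/s mul_mx_scalar mxE.
have -> : ((adjmx r *m x) 0 0)^* = (adjmx x *m r) 0 0.
  have -> : adjmx x *m r = adjmx (adjmx r *m x) by rewrite adjmxM adjmxK.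
  by rewrite /adjmx !mxE.
by rewrite mulrC.
Qed.

Lemma rank1_step P u : hproj P -> qf 1%:M u = 1 ->
  let r := (1%:M - P) *m u in let t := qf 1%:M r in
  let Pi := t^-1 *: (r *m adjmx r) in
  [/\ psd Pi, hproj (P + Pi), \tr Pi <= 1 & 1 - qf Pi u = qf P u].
Proof.
move=> hP hu r t Pi.
have [h1 h2] := hP.
have t0 : 0 <= t by exact: qf1_ge0.
have tE : t = 1 - qf P u.
  by rewrite /t /r -hproj_qf ?qfB ?hu //; exact: hprojC.
have rtu : (adjmx r *m u) 0 0 = t.
  rewrite /r adjmxM adjmxB adjmx1 h1 /t /r -hproj_qf; last exact: hprojC.
  by rewrite /qf.
have Pr : P *m r = 0 by rewrite /r mulmxA mulmxBr mulmx1 h2 subrr mul0mx.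
have rP : adjmx r *m P = 0 by rewrite -h1 -adjmxM Pr adjmx0.
have rr : adjmx r *m r = t%:M by rewrite [LHS]mx11E /t /qf mulmx1.
have tinv : t^-1 * t^-1 * t = t^-1.
  have [->|tn0] := eqVneq t 0; first by rewrite invr0 !mulr0.
  by rewrite -mulrA mulVf // mulr1.
rewrite /Pi; clear Pi; clearbody r t.
split.
- apply: psdZ; first by rewrite invr_ge0.
  by have := psd_adjmul (adjmx r); rewrite adjmxK.
- split.
    have tc : (t^-1)^* = t^-1 by rewrite geC0_conj // invr_ge0.
    by rewrite adjmxD h1 adjmxZ tc adjmxM adjmxK.
  rewrite mulmxDl !mulmxDr h2 -!scalemxAl -!scalemxAr !mulmxA Pr mul0mx.
  rewrite -(mulmxA r (adjmx r) P) rP mulmx0 !scaler0 addr0 add0r.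
  by rewrite -(mulmxA r (adjmx r) r) rr mul_mx_scalar -scalemxAl scalerA scalerA mulrA tinv.
- rewrite mxtraceZ mxtrace_mulC rr mxtrace_scalar.
  have [->|tn0] := eqVneq t 0; first by rewrite invr0 mul0r ler01.
  by rewrite mulr1n mulVf.
- rewrite qfZ qf_rank1 rtu geC0_conj //.
  have [e0|tn0] := eqVneq t 0.
    rewrite e0 invr0 mul0r subr0; move: tE; rewrite e0 => /eqP.
    by rewrite eq_sym subr_eq0 => /eqP.
  by rewrite mulrA mulVf // mul1r tE opprB addrC subrK.
Qed.

End Rank1.
Section Grp.
Variable R : realType.
Local Notation C := R[i].
Variables (gT : finGroupType) (G : {group gT}) (n : nat).
Variable f : mx_representation C G n.
Hypothesis f_unitary : forall g, g \in G -> unitary (f g).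
Variable v : 'cV[C]_n.
Hypothesis hv : adjmx v *m v = 1%:M.
Local Notation rho := (v *m adjmx v).
Local Notation sigma := (avf f rho).

Definition vg g := f g *m v.

Lemma qf1_v : qf 1%:M v = 1.
Proof. by rewrite /qf mulmx1 hv mxE. Qed.

Lemma vg_norm g : g \in G -> qf 1%:M (vg g) = 1.
Proof. by move=> gG; rewrite /vg unitary_qf1 ?qf1_v //; exact: f_unitary. Qed.

Lemma state_vg g : f g *m rho *m adjmx (f g) = vg g *m adjmx (vg g).
Proof. by rewrite /vg adjmxM !mulmxA. Qed.

Lemma tr_state g X : \tr (f g *m rho *m adjmx (f g) *m X) = qf X (vg g).
Proof. by rewrite state_vg mxtrace_mulC qf_tr. Qed.

Lemma avg_qf X : (#|G|%:R)^-1 * \sum_(g in G) qf X (vg g) = \tr (X *m sigma).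
Proof.
rewrite /avf -scalemxAr mxtraceZ mulmx_sumr raddf_sum; congr (_ * _).
by apply: eq_bigr => g _; rewrite qf_tr state_vg.
Qed.

Lemma G_gt0 : (0 < #|G|)%N.
Proof. by apply/card_gt0P; exists 1%g; exact: group1. Qed.

Lemma invG_real : ((#|G|%:R)^-1 : C)^* = (#|G|%:R)^-1.
Proof. by rewrite geC0_conj // invr_ge0 ler0n. Qed.

Lemma sigma_herm : adjmx sigma = sigma.
Proof.
rewrite /avf adjmxZ invG_real adjmx_sum.
apply: (congr1 (fun X => _ *: X)); apply: eq_bigr => g _.
by rewrite !adjmxM !adjmxK !mulmxA.
Qed.

Lemma sigma_comm h : h \in G -> f h *m sigma = sigma *m f h.
Proof.
move=> hG; have [u1 u2] := f_unitary hG.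
suff e : f h *m sigma *m adjmx (f h) = sigma.
  by rewrite -{2}e -[_ *m adjmx (f h) *m f h]mulmxA u2 mulmx1.
rewrite /avf -scalemxAr -scalemxAl mulmx_sumr mulmx_suml.
apply: (congr1 (fun X => _ *: X)).
rewrite [RHS](reindex_inj (mulgI h)) /=.
rewrite [RHS](eq_bigl (fun g => g \in G)); last by move=> g; rewrite /= groupMl.
by apply: eq_bigr => g gG; rewrite repr_mxM // adjmxM !mulmxA.
Qed.
End Grp.
Section Greedy.
Variable R : realType.
Local Notation C := R[i].
Variables (gT : finGroupType) (G : {group gT}) (n : nat).
Variable f : mx_representation C G n.
Hypothesis f_unitary : forall g, g \in G -> unitary (f g).
Variable v : 'cV[C]_n.
Hypothesis hv : adjmx v *m v = 1%:M.
Local Notation rho := (v *m adjmx v).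
Local Notation sigma := (avf f rho).
Local Notation vg := (vg f v).

Lemma ge0_ReE (x : C) : 0 <= x -> x = ((complex.Re x)%:C)%C.
Proof. by move=> x0; rewrite RRe_real // ger0_real. Qed.

Lemma exists_min (P : 'M[C]_n) : psd P ->
  exists2 g0, g0 \in G & qf P (vg g0) <= \tr (P *m sigma).
Proof.
move=> pP; set F := fun g => complex.Re (qf P (vg g)).
have [g0 g0G Hm] := @arg_minP _ _ _ 1%g (fun g => g \in G) F (group1 G).
exists g0 => //.
rewrite -avg_qf.
have le : \sum_(g in G) qf P (vg g0) <= \sum_(g in G) qf P (vg g).
  apply: ler_sum => g gG.
  rewrite [qf P (vg g0)]ge0_ReE ?psd_qf // [qf P (vg g)]ge0_ReE ?psd_qf //.
  by rewrite lecR; exact: Hm.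
apply: le_trans (ler_wpM2l _ le); last by rewrite invr_ge0 ler0n.
have Gn0 : (#|G|%:R : C) != 0 by rewrite pnatr_eq0 -lt0n (G_gt0 G).
by rewrite sumr_const -[qf P (vg g0) *+ _]mulr_natl mulrA mulVf // mul1r.
Qed.

Lemma sum_recr (V : zmodType) m (F : nat -> V) :
  \sum_(k < m.+1) F k = \sum_(k < m) F k + F m.
Proof. by rewrite big_ord_recr. Qed.

Lemma greedy (U : 'M[C]_n) (d : 'I_n -> R) (c e : R) :
  unitary U -> sigma = adjmx U *m dg (dC d) *m U -> 0 <= c -> Tsum d c <= e ->
  forall m, exists (gs : nat -> gT) (Ps : nat -> 'M[C]_n),
  [/\ (forall k, (k < m)%N -> gs k \in G), (forall k, (k < m)%N -> psd (Ps k)),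
     hproj (\sum_(k < m) Ps k), \tr (\sum_(k < m) Ps k) <= m%:R &
     \sum_(k < m) (1 - qf (Ps k) (vg (gs k))) <=
        m%:R * ((e%:C)%C + (c%:C)%C * (m%:R - 1))].
Proof.
move=> uU sE c0 Te; elim=> [|m [gs [Ps [HG HP hP trP Herr]]]].
  exists (fun _ => 1%g), (fun _ => 0); split => //.
  - by rewrite big_ord0; split; rewrite ?adjmx0 ?mulmx0.
  - by rewrite big_ord0 mxtrace0.
  - by rewrite big_ord0 mul0r.
set P := \sum_(k < m) Ps k in hP trP.
have [g0 g0G Hmin] := exists_min (hproj_psd hP).
have hu : qf 1%:M (vg g0) = 1 by exact: vg_norm.
have [pPi hPPi trPi errE] := rank1_step hP hu.
set Pi := _ *: _ in pPi hPPi trPi errE.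
exists (fun k => if k == m then g0 else gs k), (fun k => if k == m then Pi else Ps k).
have eqP' : \sum_(k < m.+1) (if (k : nat) == m then Pi else Ps k) = P + Pi.
  rewrite (sum_recr _ (fun j => if j == m then Pi else Ps j)) eqxx; congr (_ + _); apply: eq_bigr => k _.
  have km : ((k : nat) == m) = false by rewrite ltn_eqF.
  by rewrite km.
split.
- move=> k; rewrite ltnS leq_eqVlt; case: eqP => [_ _ //|_ /= km]; exact: HG.
- move=> k; rewrite ltnS leq_eqVlt; case: eqP => [_ _ //|_ /= km]; exact: HP.
- by rewrite eqP'.
- by rewrite eqP' mxtraceD mulrSr lerD.
rewrite (sum_recr _ (fun j => 1 - qf (if j == m then Pi else Ps j) (vg (if j == m then g0 else gs j)))) eqxx.
rewrite (eq_bigr (fun k : 'I_m => 1 - qf (Ps k) (vg (gs k)))); last first.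
  move=> k _; have km : ((k : nat) == m) = false by rewrite ltn_eqF.
  by rewrite !km.
rewrite errE.
have err1 : qf P (vg g0) <= (e%:C)%C + (c%:C)%C * m%:R.
  apply: le_trans Hmin _; rewrite sE.
  apply: le_trans (tr_proj_bound d uU hP c0) _.
  apply: lerD; first by rewrite lecR.
  by apply: ler_wpM2l => //; rewrite lecR.
apply: le_trans (lerD Herr err1) _.
rewrite -subr_ge0 mulrSr.
have -> : (m%:R + 1) * ((e%:C)%C + (c%:C)%C * (m%:R + 1 - 1)) -
   (m%:R * ((e%:C)%C + (c%:C)%C * (m%:R - 1)) + ((e%:C)%C + (c%:C)%C * m%:R)) =
   (c%:C)%C * m%:R :> C by ring.
by rewrite mulr_ge0 // lecR.
Qed.

End Greedy.
Section LB.
Variable R : realType.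
Local Notation C := R[i].
Variables (gT : finGroupType) (G : {group gT}) (n : nat).
Variable f : mx_representation C G n.
Hypothesis f_unitary : forall g, g \in G -> unitary (f g).
Variable v : 'cV[C]_n.
Hypothesis hv : adjmx v *m v = 1%:M.
Local Notation rho := (v *m adjmx v).
Local Notation sigma := (avf f rho).
Local Notation vg := (vg f v).

Lemma natrC m : (m%:R : C) = ((m%:R : R)%:C)%C.
Proof. by rewrite rmorph_nat. Qed.

Lemma tr_proj_Tsum (c : R) U d : unitary U ->
  sigma = adjmx U *m diag_mx (\row_i ((d i)%:C)%C) *m U ->
  \tr (sigma *m (adjmx U *m diag_mx (\row_i (if c <= d i then 1 else 0)) *m U)) =
  ((Tsum d c)%:C)%C.
Proof. by move=> uU sE; rewrite sE; exact: trace_proj. Qed.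

Lemma Tsum_ge0 m (d : 'I_m -> R) c : 0 < c -> 0 <= Tsum d c.
Proof.
move=> c0; apply: sumr_ge0 => k _; case: ifP => // h.
exact: le_trans (ltW c0) h.
Qed.

Lemma LB_point (eps d1 d2 lam : R) (M : nat) : 0 < eps -> eps < 1 -> 0 < d1 -> 0 < d2 ->
  is_M f rho eps M -> tr_proj_ge_le sigma (expR (- lam)) (eps - d1 - d2) ->
  lam - ln (1 / (d1 * d2)) <= ln M%:R.
Proof.
move=> eps0 eps1 d10 d20 [_ HM] [U [d [uU [sE trle]]]].
set c := expR (- lam); set e := eps - d1 - d2.
have c0 : 0 < c by exact: expR_gt0.
have Te : Tsum d c <= e by rewrite -lecR -(tr_proj_Tsum c uU sE).
have e0 : 0 <= e := le_trans (Tsum_ge0 d c0) Te.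
have d11 : d1 <= 1.
  by move: e0 eps1; rewrite /e; lra.
set x := d1 * d2 / c.
have x0 : 0 <= x by rewrite /x divr_ge0 // ?mulr_ge0 // ltW.
set N := (Num.truncn x).+1.
have [gs [Ps [HG HP hP trP Herr]]] := greedy f_unitary hv uU sE (ltW c0) Te N.
set P := \sum_(k < N) Ps k in hP trP.
have NC0 : (N%:R : C) != 0 by rewrite pnatr_eq0.
have NR0 : (0 : R) < N%:R by rewrite ltr0n.
have cN : c * (N%:R - 1) <= d1 * d2.
  rewrite /N mulrSr addrK.
  have := truncn_le x; rewrite x0 => h.
  rewrite -(@ler_pM2l _ c^-1) ?invr_gt0 // mulrA mulVf ?gt_eqF // mul1r mulrC.
  exact: h.
have NM : (N <= M)%N.
  apply: HM; exists (fun i : 'I_N => gs i), (fun i : 'I_N => Ps i + N%:R^-1 *: (1%:M - P)).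
  split; first by move=> i; apply: HG.
  split.
    move=> i; apply: psdD; first exact: HP.
    by apply: psdZ; [rewrite invr_ge0 ler0n | exact/hproj_psd/hprojC].
  split.
    rewrite big_split /= -/P sumr_const card_ord -scaler_nat scalerA mulfV //.
    by rewrite scale1r addrC subrK.
  have err : forall i : 'I_N, \tr (f (gs i) *m rho *m adjmx (f (gs i)) *m
         (1%:M - (Ps i + N%:R^-1 *: (1%:M - P)))) <= 1 - qf (Ps i) (vg (gs i)).
    move=> i; rewrite tr_state qfB qfD qfZ vg_norm ?HG //.
    rewrite opprD addrA lerBlDr lerDl; apply: mulr_ge0; first by rewrite invr_ge0 ler0n.
    exact/psd_qf/hproj_psd/hprojC.
  apply: le_trans (ler_wpM2l _ (ler_sum _ (fun i _ => err i))) _.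
    by rewrite invr_ge0 ler0n.
  apply: le_trans (ler_wpM2l _ Herr) _; first by rewrite invr_ge0 ler0n.
  rewrite mulrA mulVf // mul1r natrC -!rmorphB -rmorphM -rmorphD lecR.
  by move: cN d11 d10 d20; rewrite /e; nra.
have N0 : (0 : R) < N%:R by [].
have xN : x < N%:R by rewrite /N truncnS_gt.
have lnx : ln x = lam + ln (d1 * d2).
  rewrite /x lnM ?posrE ?mulr_gt0 ?invr_gt0 // addrC; congr (_ + _).
  by rewrite /c lnV ?posrE // expRK opprK.
rewrite div1r lnV ?posrE ?mulr_gt0 // opprK -lnx.
have Mpos : (0 : R) < M%:R by rewrite ltr0n (leq_trans _ NM).
have x0' : 0 < x by rewrite /x divr_gt0 ?mulr_gt0.
apply: le_trans (_ : ln N%:R <= _).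
  by rewrite ler_ln ?posrE // ltW.
by rewrite ler_ln ?posrE // ler_nat.
Qed.

End LB.
Lemma real_final (R : realType) (eps d1 d2 p c r N : R) : 0 < eps -> 0 < d1 -> 0 < d2 -> 0 < c -> 0 <= N -> 0 <= r ->
  c * r <= p -> p <= 1 -> eps + (d1 + 2 * d2) < p ->
  N * (1 - eps) <= (1 + 2 / (d1 + 2 * d2)) * r + (1 + (d1 + 2 * d2) / 2) * N * (1 - p) ->
  N * c <= 1 / (d1 * d2 ^+ 2).
Proof.
move=> eps0 d10 d20 c0 N0 r0 cr p1 pgt H.
set s := d1 + 2 * d2 in pgt H.
have s0 : 0 < s by rewrite /s; lra.
have s1 : s < 1 by lra.
have H1 : N * s / 2 <= (1 + 2 / s) * r.
  have : N * (1 - eps) - (1 + s / 2) * N * (1 - p) <= (1 + 2 / s) * r by lra.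
  apply: le_trans.
  have e : N * (1 - eps) - (1 + s / 2) * N * (1 - p) = N * (p - eps) - N * (s / 2) * (1 - p) by ring.
  rewrite e.
  have : N * (s / 2) * (1 - p) <= N * (s / 2).
    rewrite -[X in _ <= X]mulr1; apply: ler_wpM2l.
      by rewrite mulr_ge0 // divr_ge0 // ltW.
    lra.
  have : N * s <= N * (p - eps) by apply: ler_wpM2l => //; lra.
  lra.
have H2 : N * c * s ^+ 2 <= 2 * (s + 2).
  have e : N * c * s ^+ 2 = (2 * s * c) * (N * s / 2) by field.
  rewrite e.
  apply: le_trans (ler_wpM2l _ H1) _; first by rewrite !mulr_ge0 // ltW.
  have e2 : 2 * s * c * ((1 + 2 / s) * r) = 2 * (s + 2) * (c * r).
    by field; rewrite gt_eqF.
  rewrite e2 -[X in _ <= X]mulr1; apply: ler_wpM2l; first by rewrite mulr_ge0 //; lra.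
  lra.
have amgm : 27 * (d1 * d2 ^+ 2) <= s ^+ 3.
  have e : s ^+ 3 - 27 * (d1 * d2 ^+ 2) = (d1 - d2) ^+ 2 * (d1 + 8 * d2) by rewrite /s; ring.
  rewrite -subr_ge0 e mulr_ge0 ?sqr_ge0 //; lra.
have s3 : s ^+ 3 <= s ^+ 2 by rewrite exprS ler_piMl ?sqr_ge0 // ltW.
have D : 0 < d1 * d2 ^+ 2 by rewrite mulr_gt0 ?exprn_gt0.
rewrite ler_pdivlMr //.
have : N * c * (d1 * d2 ^+ 2) * s ^+ 2 <= s ^+ 2.
  have e : N * c * (d1 * d2 ^+ 2) * s ^+ 2 = (N * c * s ^+ 2) * (d1 * d2 ^+ 2) by ring.
  rewrite e; apply: le_trans (ler_wpM2r (ltW D) H2) _.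
  nra.
move=> h; have s20 : 0 < s ^+ 2 by rewrite exprn_gt0.
by rewrite -(ler_pM2r s20) mul1r.
Qed.
Section UB.
Variable R : realType.
Local Notation C := R[i].
Variables (gT : finGroupType) (G : {group gT}) (n : nat).
Variable f : mx_representation C G n.
Hypothesis f_unitary : forall g, g \in G -> unitary (f g).
Variable v : 'cV[C]_n.
Hypothesis hv : adjmx v *m v = 1%:M.
Local Notation rho := (v *m adjmx v).
Local Notation sigma := (avf f rho).
Local Notation vg := (vg f v).

Lemma qf_split_bound (A : 'M[C]_n) (x y : 'cV[C]_n) (t : R) : psd A -> 0 < t ->
  qf A (x + y) <= (1 + (t%:C)%C) * qf A x + (1 + (t%:C)%C^-1) * qf A y.
Proof.
move=> pA t0; set T := (t%:C)%C.
have T0 : 0 < T by rewrite ltcR.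
have Tc : T^* = T by rewrite geC0_conj // ltW.
have e : qf A (x + y) + T^-1 * qf A (T *: x + (-1) *: y) =
   (1 + T) * qf A x + (1 + T^-1) * qf A y.
  rewrite !qf_vecD !qf_vecZ !bilZl !bilZr Tc rmorphN1.
  by field; rewrite gt_eqF.
rewrite -e lerDl; apply: mulr_ge0; [by rewrite invr_ge0 ltW | exact: psd_qf].
Qed.

Lemma dg_ind_herm m (d : 'I_m -> R) c : adjmx (dg (ind d c)) = dg (ind d c).
Proof.
rewrite adj_dg; congr dg; apply/funext => k; rewrite /ind.
by case: ifP; rewrite ?rmorph1 ?rmorph0.
Qed.

Lemma dg_ind_idem m (d : 'I_m -> R) c : dg (ind d c) *m dg (ind d c) = dg (ind d c).
Proof.
rewrite dgM; congr dg; apply/funext => k; rewrite /ind.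
by case: ifP; rewrite ?mulr1 ?mulr0.
Qed.

Lemma proj_comm (U : 'M[C]_n) d c (W : 'M[C]_n) : unitary U ->
  sigma = adjmx U *m dg (dC d) *m U -> W *m sigma = sigma *m W ->
  W *m (adjmx U *m dg (ind d c) *m U) = (adjmx U *m dg (ind d c) *m U) *m W.
Proof.
move=> [u1 u2] sE cW.
set W' := U *m W *m adjmx U.
have WE : W = adjmx U *m W' *m U by rewrite /W' !mulmxA u2 mul1mx -mulmxA u2 mulmx1.
have uU : unitary U by split.
clearbody W'.
have e1 : W *m sigma = adjmx U *m (W' *m dg (dC d)) *m U.
  by rewrite sE WE unit_conj_mul.
have e2 : sigma *m W = adjmx U *m (dg (dC d) *m W') *m U.
  by rewrite sE WE unit_conj_mul.
have DW : dg (dC d) *m W' = W' *m dg (dC d).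
  by apply: (unit_conj_inj uU); rewrite -e1 -e2 cW.
have EW : dg (ind d c) *m W' = W' *m dg (ind d c).
  have dgl (x : 'I_n -> C) (A : 'M[C]_n) i j : (dg x *m A) i j = x i * A i j.
    by rewrite /dg mul_diag_mx !mxE.
  have dgr (x : 'I_n -> C) (A : 'M[C]_n) i j : (A *m dg x) i j = A i j * x j.
    by rewrite /dg mul_mx_diag !mxE.
  apply/matrixP => i j; move/matrixP: (DW) => /(_ i j).
  rewrite !dgl !dgr /dC /ind.
  have [->|wn0] := eqVneq (W' i j) 0; first by rewrite !mulr0 !mul0r.
  move=> h; have dij : d i = d j.
    apply: complexI; apply: (mulIf wn0); by rewrite h mulrC.
  by rewrite dij mulrC.
by rewrite WE !(unit_conj_mul _ _ uU) EW.
Qed.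

End UB.
Section UB2.
Variable R : realType.
Local Notation C := R[i].
Variables (gT : finGroupType) (G : {group gT}) (n : nat).
Variable f : mx_representation C G n.
Hypothesis f_unitary : forall g, g \in G -> unitary (f g).
Variable v : 'cV[C]_n.
Hypothesis hv : adjmx v *m v = 1%:M.
Local Notation rho := (v *m adjmx v).
Local Notation sigma := (avf f rho).
Local Notation vg := (vg f v).

Lemma UB_point (eps d1 d2 : R) (N : nat) (U : 'M[C]_n) d (c : R) :
  0 < eps -> 0 < d1 -> 0 < d2 -> distinguishable f rho eps N -> unitary U ->
  sigma = adjmx U *m dg (dC d) *m U -> 0 < c -> eps + d1 + 2 * d2 < Tsum d c ->
  N%:R * c <= 1 / (d1 * d2 ^+ 2).
Proof.
move=> eps0 d10 d20 [gi [Pi [HG [HP [Hsum Herr]]]]] uU sE c0 pgt.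
have [N0|Npos] := posnP N.
  by rewrite N0 mul0r divr_ge0 // ltW // mulr_gt0 // exprn_gt0.
set E := dg (ind d c); set P := adjmx U *m E *m U.
have hP : hproj P.
  split; first by rewrite /P adj_unit_conj dg_ind_herm.
  by rewrite /P (unit_conj_mul _ _ uU) dg_ind_idem.
have comm h : h \in G -> f h *m P = P *m f h.
  by move=> hG; apply: (proj_comm (f:=f) (v:=v)) => //; exact: (sigma_comm f_unitary v hG).
have qfPg g : g \in G -> qf P (vg g) = qf P v.
  move=> gG; have [u1 u2] := f_unitary gG.
  by rewrite /vg -qf_mul -mulmxA -comm // mulmxA u2 mul1mx.
have pE : qf P v = ((Tsum d c)%:C)%C.
  have := avg_qf f v P.
  have -> : \sum_(g in G) qf P (vg g) = qf P v *+ #|G|.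
    by rewrite -sumr_const; apply: eq_bigr => g gG; exact: qfPg.
  rewrite -[qf P v *+ _]mulr_natl mulrA mulVf ?mul1r; last first.
    by rewrite pnatr_eq0 -lt0n (G_gt0 G).
  by move=> ->; rewrite sE mxtrace_mulC /P trace_proj.
set p := Tsum d c in pgt pE.
have one : (1 : C) = ((1 : R)%:C)%C by rewrite rmorph1.
have p1 : p <= 1.
  have := psd_qf v (hproj_psd (hprojC hP)).
  by rewrite qfB (qf1_v hv) pE subr_ge0 one lecR.
set r := \sum_k (if c <= d k then 1 else 0 : R).
have trP : \tr P = (r%:C)%C.
  rewrite /P tr_unit_conj // tr_dg rmorph_sum; apply: eq_bigr => k _.
  by rewrite /ind; case: ifP; rewrite ?rmorph1 ?rmorph0.
have cr : c * r <= p.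
  rewrite /r /p /Tsum mulr_sumr; apply: ler_sum => k _.
  by case: ifP => h; rewrite ?mulr1 ?mulr0.
have r0 : 0 <= r by apply: sumr_ge0 => k _; case: ifP.
set s := d1 + 2 * d2.
have s0 : 0 < s by rewrite /s; lra.
set t := 2 / s.
have t0 : 0 < t by rewrite /t divr_gt0.
have tC0 : 0 <= (t%:C)%C by rewrite lecR ltW.
have bnd (i : 'I_N) : qf (Pi i) (vg (gi i)) <=
   (1 + (t%:C)%C) * \tr (adjmx P *m Pi i *m P) + (1 + ((t%:C)%C)^-1) * (1 - (p%:C)%C).
  have ue : vg (gi i) = P *m vg (gi i) + (1%:M - P) *m vg (gi i).
    by rewrite mulmxBl mul1mx addrC subrK.
  rewrite {1}ue; apply: le_trans (qf_split_bound _ _ (HP i) t0) _.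
  apply: lerD; apply: ler_wpM2l.
  - by rewrite addr_ge0 ?ler01.
  - rewrite -qf_mul; apply: le_trans (qf_le_tr _ _) _.
      by move=> x; change (0 <= qf (adjmx P *m Pi i *m P) x); rewrite qf_mul; exact: psd_qf.
    by rewrite (vg_norm f_unitary hv (HG i)) // mulr1.
  - by rewrite addr_ge0 ?ler01 ?invr_ge0.
  - have le1 y : qf (Pi i) y <= qf 1%:M y.
      rewrite -Hsum qf_sum (bigD1 i) //= lerDl; apply: sumr_ge0 => j _; exact: psd_qf.
    apply: le_trans (le1 _) _.
    rewrite -hproj_qf; last exact: hprojC.
    by rewrite qfB (vg_norm f_unitary hv (HG i)) // qfPg ?HG // pE.
have sumtr : \sum_(i < N) \tr (adjmx P *m Pi i *m P) = (r%:C)%C.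
  have -> : \sum_(i < N) \tr (adjmx P *m Pi i *m P) = \tr (\sum_(i < N) (adjmx P *m Pi i *m P)).
    by rewrite raddf_sum.
  by rewrite -mulmx_suml -mulmx_sumr Hsum mulmx1 hP.1 hP.2 trP.
have S1 : \sum_(i < N) qf (Pi i) (vg (gi i)) <=
    (1 + (t%:C)%C) * (r%:C)%C + N%:R * ((1 + ((t%:C)%C)^-1) * (1 - (p%:C)%C)).
  apply: le_trans (ler_sum _ (fun i _ => bnd i)) _.
  by rewrite big_split /= -mulr_sumr sumtr sumr_const card_ord mulr_natl.
have S2 : N%:R - \sum_(i < N) qf (Pi i) (vg (gi i)) <= N%:R * (eps%:C)%C.
  have NC0 : (0 : C) < N%:R by rewrite ltr0n.
  have NiC : (0 : C) < (N%:R)^-1 by rewrite invr_gt0.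
  rewrite -(ler_pM2l NiC) mulrA mulVf ?gt_eqF // mul1r.
  apply: le_trans Herr; rewrite le_eqVlt; apply/orP; left; apply/eqP; congr (_ * _).
  rewrite [X in X - _](_ : _ = \sum_(i < N) (1 : C)); last by rewrite sumr_const card_ord.
  rewrite -sumrB; apply: eq_bigr => i _.
  by rewrite tr_state qfB (vg_norm f_unitary hv (HG i)).
have H : ((N%:R * (1 - eps))%:C)%C <= (((1 + t) * r + (1 + t^-1) * N%:R * (1 - p))%:C)%C.
  rewrite !rmorphD !rmorphM !rmorphD ?rmorphB ?rmorphN fmorphV !rmorph1 !rmorph_nat.
  rewrite -[_ * N%:R * _]mulrA mulrCA.
  apply: le_trans S1; rewrite mulrBr mulr1 lerBlDr.
  by move: S2; rewrite lerBlDr addrC.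
rewrite lecR in H.
apply: (real_final eps0 d10 d20 c0 (ler0n _ _) r0 cr p1); first by rewrite addrA.
by move: H; rewrite /t invf_div.
Qed.

End UB2.
Lemma M_ge1 (R : realType) (gT : finGroupType) (G : {group gT}) (n : nat)
  (f : mx_representation R[i] G n) (rho : 'M[R[i]]_n) (eps : R) (M : nat) :
  0 < eps -> is_M f rho eps M -> (1 <= M)%N.
Proof.
move=> eps0 [_ HM]; apply: HM.
exists (fun _ => 1%g), (fun _ => 1%:M); split; first by move=> i; exact: group1.
split; first by move=> i u; exact: qf1_ge0.
split; first by rewrite big_ord1.
rewrite big1; last by move=> i _; rewrite subrr mulmx0 mxtrace0.
by rewrite mulr0 lecR ltW.
Qed.

Theorem mainTheorem6 (R : realType) (gT : finGroupType) (G : {group gT})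
  (n : nat) (f : mx_representation R[i] G n)
  (f_unitary : forall g, g \in G -> unitary (f g))
  (rho : 'M[R[i]]_n) (rho_pure : pure_state rho)
  (eps d1 d2 : R) (eps_gt0 : 0 < eps) (eps_lt1 : eps < 1)
  (d1_gt0 : 0 < d1) (d2_gt0 : 0 < d2)
  (M : nat) (HM : is_M f rho eps M) :
  (Hs (eps - d1 - d2) (avf f rho) - (ln (1 / (d1 * d2)))%:E
     <= (ln M%:R)%:E)%E /\
  ((ln M%:R)%:E
     <= Hs (eps + d1 + 2 * d2) (avf f rho) + (ln (1 / (d1 * d2 ^+ 2)))%:E)%E.
Proof.
have M1 := M_ge1 eps_gt0 HM.
case: rho_pure HM => v [hv ->] HM.
split.
  rewrite leeBlDr // -EFinD; apply: ge_ereal_sup => _ [lam hlam <-].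
  rewrite lee_fin -lerBlDr.
  exact: (LB_point f_unitary hv eps_gt0 eps_lt1 d1_gt0 d2_gt0 HM hlam).
set L := ln (1 / (d1 * d2 ^+ 2)).
rewrite -leeBlDr // -EFinB; apply/lee_addgt0Pr => eta eta0.
have [U [d [uU sE]]] := spectral_herm (sigma_herm f v).
set lam := ln M%:R - L - eta.
have Mpos : (0 : R) < M%:R by rewrite ltr0n.
have inS : tr_proj_ge_le (avf f (v *m adjmx v)) (expR (- lam)) (eps + d1 + 2 * d2).
  exists U, d; split => //; split => //.
  rewrite (tr_proj_Tsum (expR (- lam)) uU sE) lecR leNgt; apply/negP => hlt.
  have := UB_point f_unitary hv eps_gt0 d1_gt0 d2_gt0 HM.1 uU sE (expR_gt0 _) hlt.
  have D : (0 : R) < d1 * d2 ^+ 2 by rewrite mulr_gt0 // exprn_gt0.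
  rewrite -(ler_ln (x := _ * _)) ?posrE ?mulr_gt0 ?expR_gt0 ?divr_gt0 ?invr_gt0 //.
  rewrite lnM ?posrE ?expR_gt0 // expRK -/L /lam.
  by move: eta0; lra.
have : (lam%:E <= Hs (eps + d1 + 2 * d2) (avf f (v *m adjmx v)))%E.
  apply: le_ereal_sup_tmp; exists lam%:E; last exact: lexx.
  exact: imageP.
move=> h; apply: le_trans (leeD2r _ h).
by rewrite -EFinD /lam subrK.
Qed.
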